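(* Let $\epsilon>0$, $\delta\ge0$, $n\ge1$, $\theta_0\in(0,1)$, set $b=e^{-\epsilon}$ and $q=\frac{2\delta b}{1-b+2\delta b}$, let $X\sim\mathrm{Binom}(n,\theta)$ with $\theta$ unknown, and let $Z\mid X\sim\mathrm{Tulap}(X,b,q)$. Define $p(\theta_0,Z):=P(X'+N\ge Z\mid Z)$, where the probability is over independent $X'\sim\mathrm{Binom}(n,\theta_0)$ and $N\sim\mathrm{Tulap}(0,b,q)$ (independent of $Z$). Then: (1) $p(\theta_0,Z)$ is a $p$-value for $H_0:\theta\le\theta_0$ versus $H_1:\theta>\theta_0$; (2) for every $0<\alpha<1$, the test $\phi^*_x=P_{Z\mid X\sim\mathrm{Tulap}(X,b,q)}\big(p(\theta_0,Z)\le\alpha\mid X=x\big)$ is the uniformly most powerful level-$\alpha$ test for $H_0:\theta\le\theta_0$ versus $H_1:\theta>\theta_0$ among $\mathscr D^n_{\epsilon,\delta}$; (3) $p(\theta_0,Z)=\sum_{x=0}^n F_N(x-Z)\binom nx\theta_0^x(1-\theta_0)^{n-x}$, where $F_N$ is the cdf of $\mathrm{Tulap}(0,b,q)$.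
   Context: A $p$-value for $H_0:\theta\in\Theta_0$ based on data $Z$ is a random variable $p(Z)\in[0,1]$ such that for every $\theta\in\Theta_0$ and every $0<\alpha<1$, $P_\theta(p(Z)\le\alpha)\le\alpha$. Nearest integer function: $[t]$ is the integer nearest to $t$, with $[z+1/2]$ ($z\in\mathbb{Z}$) defined as the nearest even integer. Tulap distribution: for $m\in\mathbb{R}$, $b\in(0,1)$, $q\in[0,1)$, $N_0\sim\mathrm{Tulap}(m,b,0)$ has cdf $F_{N_0}(x)=\frac{b^{-[x-m]}}{1+b}\big(b+(x-m-[x-m]+\tfrac12)(1-b)\big)$ for $x\leq [m]$ and $F_{N_0}(x)=1-\frac{b^{[x-m]}}{1+b}\big(b+([x-m]-(x-m)+\tfrac12)(1-b)\big)$ for $x>[m]$; and $N\sim \mathrm{Tulap}(m,b,q)$ has cdf $F_N(x)=\frac{F_{N_0}(x)-q/2}{1-q}\,I\{q/2\leq F_{N_0}(x)\leq 1-q/2\}+I\{F_{N_0}(x)>1-q/2\}$. A test is a function $\phi:\{0,\dots,n\}\to[0,1]$ (probability of rejecting when $X=x$). $\mathscr D^n_{\epsilon,\delta}$ is the set of tests $\phi$ such that for all $x\in\{0,\dots,n-1\}$: $\phi_x\le e^\epsilon\phi_{x+1}+\delta$, $\phi_{x+1}\le e^\epsilon\phi_x+\delta$, $1-\phi_x\le e^\epsilon(1-\phi_{x+1})+\delta$, $1-\phi_{x+1}\le e^\epsilon(1-\phi_x)+\delta$. A test $\phi^*\in\Phi$ is uniformly most powerful at level $\alpha$ among $\Phi$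 if $\sup_{\theta\in\Theta_0}\mathbb{E}_\theta\phi^*\le\alpha$ and for every $\phi\in\Phi$ with $\sup_{\theta\in\Theta_0}\mathbb{E}_\theta\phi\le\alpha$, $\mathbb{E}_\theta\phi^*\ge\mathbb{E}_\theta\phi$ for all $\theta$ in the alternative. *)

(* Defs.v *)
From HB Require Import structures.
From mathcomp Require Import all_boot all_order all_algebra.
From mathcomp Require Import all_classical all_reals all_analysis.
Set Implicit Arguments. Unset Strict Implicit. Unset Printing Implicit Defensive.
Import Order.TTheory GRing.Theory Num.Theory.
Local Open Scope ring_scope.
Local Open Scope classical_set_scope.

Section Defs.
Variable R : realType.

Definition nearest (t : R) : int :=
  let f := Num.floor t in
  let d := t - f%:~R in
  if d < 2^-1 then f
  else if 2^-1 < d then f + 1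
  else if ~~ odd (absz f) then f else f + 1.

(* cdf of Tulap(m, b, 0) *)
Definition tulap0_cdf (m b x : R) : R :=
  let r := nearest (x - m) in
  if x <= (nearest m)%:~R then
    b ^ (- r) / (1 + b) * (b + (x - m - r%:~R + 2^-1) * (1 - b))
  else
    1 - b ^ r / (1 + b) * (b + (r%:~R - (x - m) + 2^-1) * (1 - b)).

Definition tulap_cdf (m b q x : R) : R :=
  let F0 := tulap0_cdf m b x in
  (if (q / 2 <= F0) && (F0 <= 1 - q / 2) then (F0 - q / 2) / (1 - q) else 0)
  + (if 1 - q / 2 < F0 then 1 else 0).

Definition binom_pmf (n : nat) (theta : R) (x : nat) : R :=
  'C(n, x)%:R * theta ^+ x * (1 - theta) ^+ (n - x).

(* a test phi : {0,...,n} -> [0,1] (values outside {0..n} are irrelevant) *)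
Definition is_test (n : nat) (phi : nat -> R) : Prop :=
  forall x, (x <= n)%N -> 0 <= phi x <= 1.

Definition expect (n : nat) (theta : R) (phi : nat -> R) : R :=
  \sum_(x < n.+1) binom_pmf n theta x * phi x.

Definition DP_tests (eps delta : R) (n : nat) (phi : nat -> R) : Prop :=
  is_test n phi /\
  forall x, (x < n)%N ->
    [/\ phi x <= expR eps * phi x.+1 + delta,
        phi x.+1 <= expR eps * phi x + delta,
        1 - phi x <= expR eps * (1 - phi x.+1) + delta &
        1 - phi x.+1 <= expR eps * (1 - phi x) + delta].

Definition h0_set (theta0 theta : R) : Prop := 0 <= theta <= 1 /\ theta <= theta0.
Definition h1_set (theta0 theta : R) : Prop := 0 <= theta <= 1 /\ theta0 < theta.

Definition UMP (n : nat) (theta0 alpha : R) (Phi : (nat -> R) -> Prop)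
    (phis : nat -> R) : Prop :=
  Phi phis /\
  (forall theta, h0_set theta0 theta -> expect n theta phis <= alpha) /\
  (forall phi, Phi phi ->
     (forall theta, h0_set theta0 theta -> expect n theta phi <= alpha) ->
     forall theta, h1_set theta0 theta -> expect n theta phi <= expect n theta phis).

End Defs.

(* Main.v *)
Require Import Defs.
From HB Require Import structures.
From mathcomp Require Import all_boot all_order all_algebra.
From mathcomp Require Import all_classical all_reals all_analysis.
From mathcomp Require Import ring lra zify.
Import Order.TTheory GRing.Theory Num.Theory.
Local Open Scope ring_scope.
Local Open Scope classical_set_scope.

Section Near.
Variable R : realType.

Lemma nearest_bnd (y : R) :
  (nearest y)%:~R - 2^-1 <= y <= (nearest y)%:~R + 2^-1.
Proof.
rewrite /nearest; set f := Num.floor y.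
have := floor_itv y; rewrite -/f intrD1 => /andP [h1 h2].
case: ifP => [hd|/negbT]; first by apply/andP; split; lra.
rewrite -leNgt => hd1.
case: ifP => [hd|/negbT]; first by rewrite intrD1; apply/andP; split; lra.
rewrite -leNgt => hd2.
case: ifP => _; last rewrite intrD1; apply/andP; split; lra.
Qed.

Lemma nearest_nat (k : nat) : nearest (k%:R : R) = k.
Proof.
rewrite /nearest.
have -> : Num.floor (k%:R : R) = k%:Z.
  by apply/floor_def; rewrite intrD1 pmulrn; apply/andP; split; lra.
by rewrite pmulrn subrr ifT //; lra.
Qed.

Lemma nearest0 : nearest (0 : R) = 0.
Proof. by have := nearest_nat 0; rewrite mulr0n. Qed.
End Near.
Section Tul0.
Variables (R : realType) (b : R).
Hypotheses (b0 : 0 < b) (b1 : b < 1).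
Local Ltac hb := move: (b0) (b1) => ? ?.

Definition Lf (r : int) (y : R) := b ^ (- r) / (1 + b) * (b + (y - r%:~R + 2^-1) * (1 - b)).
Definition Uf (r : int) (y : R) := 1 - b ^ r / (1 + b) * (b + (r%:~R - y + 2^-1) * (1 - b)).
Definition Af r y := if y <= 0 then Lf r y else Uf r y.
Definition F0 y := tulap0_cdf 0 b y.

Lemma bne0 : b != 0. Proof. by rewrite gt_eqF. Qed.
Lemma b1ne0 : 1 + b != 0. Proof. have h : 0 < 1 + b by hb; lra. by rewrite gt_eqF. Qed.

Lemma F0_near y : F0 y = Af (nearest y) y.
Proof. by rewrite /F0 /tulap0_cdf /Af nearest0 !subr0. Qed.

Lemma LU0 t : Lf 0 t = Uf 0 t.
Proof. rewrite /Lf /Uf oppr0 !expr0z. have := b1ne0. move=> h. field. exact: h. Qed.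

Lemma bpowS r : b ^ (r + 1) = b ^ r * b.
Proof. by rewrite expfzDr ?bne0 // expr1z. Qed.
Lemma bpowNS r : b ^ (- (r + 1)) = b ^ (- r) / b.
Proof. by rewrite opprD expfzDr ?bne0 // exprN1. Qed.

Lemma A_tie r y : y = r%:~R + 2^-1 -> Af r y = Af (r + 1) y.
Proof.
move=> ->; rewrite /Af; case: ifP => _.
  rewrite /Lf bpowNS intrD1. have := bne0; have := b1ne0 => h1 h2. field. by apply/andP.
rewrite /Uf bpowS intrD1. have := bne0; have := b1ne0 => h1 h2. field. exact: h1.
Qed.

Lemma int_le_of (r s : int) : (r%:~R : R) <= s%:~R + 1 -> r <= s + 1.
Proof. by move=> h; rewrite -(ler_int R) intrD1. Qed.

Lemma F0_piece r y : r%:~R - 2^-1 <= y <= r%:~R + 2^-1 -> F0 y = Af r y.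
Proof.
move=> /andP [h1 h2]; rewrite F0_near; set r0 := nearest y.
have /andP [h3 h4] := @nearest_bnd R y; rewrite -/r0 in h3 h4.
have c1 : r <= r0 + 1 by apply: int_le_of; lra.
have c2 : r0 <= r + 1 by apply: int_le_of; lra.
have [e|ne] := eqVneq r r0; first by rewrite e.
have [e1|e2] : r = r0 + 1 \/ r0 = r + 1 by lia.
  rewrite e1 A_tie //; apply/eqP; rewrite eq_le; apply/andP; split; first by [].
  by move: h1; rewrite e1 intrD1 => h1; lra.
rewrite e2 -A_tie //; apply/eqP; rewrite eq_le; apply/andP; split; first by [].
by move: h3; rewrite e2 intrD1 => h3; lra.
Qed.

Lemma bpow_le1 (k : int) : 0 <= k -> 0 < b ^ k <= 1.
Proof.
hb; case: k => [m|m] // _; rewrite -exprnP; apply/andP; split.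
  exact: exprn_gt0. by apply: exprn_ile1; lra.
Qed.

Lemma bpow_leb (k : int) : 1 <= k -> b ^ k <= b.
Proof.
hb; case: k => [[|m]|m] //= _; rewrite exprSz.
have : b ^+ m <= 1 by apply: exprn_ile1; lra.
rewrite exprnP => h. have h' : 0 < b ^ m by exact: exprz_gt0.
nra.
Qed.

Lemma int_le0 (r : int) : (r%:~R : R) <= 2^-1 -> r <= 0.
Proof.
move=> h; rewrite leNgt; apply/negP => h1.
have : 1 <= r by lia.
rewrite -(ler_int R) => h2; lra.
Qed.

Lemma int_ge0 (r : int) : - 2^-1 <= (r%:~R : R) -> 0 <= r.
Proof.
move=> h; rewrite leNgt; apply/negP => h1.
have : r <= -1 by lia.
rewrite -(ler_int R) => h2; move: h2; rewrite (_ : (-1)%:~R = -1) //; lra.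
Qed.

Lemma Lf_shift r y : Lf (r + 1) (y + 1) = Lf r y / b.
Proof.
rewrite /Lf bpowNS intrD1. have := bne0; have := b1ne0 => h1 h2. field. by apply/andP.
Qed.

Lemma Uf_shift r y : 1 - Uf (r + 1) (y + 1) = b * (1 - Uf r y).
Proof.
rewrite /Uf bpowS intrD1. have := bne0; have := b1ne0 => h1 h2. field. exact: h1.
Qed.

Lemma Lf_mul r y : Lf r y * (1 + b) = b ^ (- r) * (b + (y - r%:~R + 2^-1) * (1 - b)).
Proof. rewrite /Lf. have := b1ne0 => h1. field. exact: h1. Qed.

Lemma Uf_mul r y : (1 - Uf r y) * (1 + b) = b ^ r * (b + (r%:~R - y + 2^-1) * (1 - b)).
Proof. rewrite /Uf. have := b1ne0 => h1. field. exact: h1. Qed.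

Lemma Lf_diff r y y' : Lf r y - Lf r y' = b ^ (- r) * (1 - b) / (1 + b) * (y - y').
Proof. rewrite /Lf. have := b1ne0 => h1. field. exact: h1. Qed.

Lemma Uf_diff r y y' : Uf r y - Uf r y' = b ^ r * (1 - b) / (1 + b) * (y - y').
Proof. rewrite /Uf. have := b1ne0 => h1. field. exact: h1. Qed.

Lemma nb (y : R) : (nearest y)%:~R - 2^-1 <= y <= (nearest y)%:~R + 2^-1.
Proof. exact: (@nearest_bnd R y). Qed.

Lemma F0_step_lo y : y <= - 2^-1 -> F0 (y + 1) = F0 y / b.
Proof.
hb => hy; have [hy1|hy1] := lerP (y + 1) 0.
  set r := nearest y; have /andP [h1 h2] := nb y; rewrite -/r in h1 h2.
  rewrite (F0_piece r y) ?h1 ?h2 // (F0_piece (r + 1) (y + 1)); last first.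
    by rewrite intrD1; apply/andP; split; lra.
  by rewrite /Af hy1 ifT ?Lf_shift //; lra.
rewrite (F0_piece (-1) y); last by rewrite (_ : (-1)%:~R = -1) //; apply/andP; split; lra.
rewrite (F0_piece 0 (y + 1)); last by apply/andP; split; lra.
rewrite /Af ifN -?ltNge // ifT; last by lra.
by rewrite -LU0 -Lf_shift.
Qed.

Lemma F0_step_hi y : - 2^-1 <= y -> 1 - F0 (y + 1) = b * (1 - F0 y).
Proof.
hb => hy; have [hy1|hy1] := lerP y 0.
  rewrite (F0_piece 0 y); last by apply/andP; split; lra.
  rewrite (F0_piece 1 (y + 1)); last by apply/andP; split; lra.
  rewrite /Af hy1 ifN -?ltNge; last by lra.
  by rewrite LU0 -Uf_shift.
set r := nearest y; have /andP [h1 h2] := nb y; rewrite -/r in h1 h2.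
rewrite (F0_piece r y) ?h1 ?h2 // (F0_piece (r + 1) (y + 1)); last first.
  by rewrite intrD1; apply/andP; split; lra.
rewrite /Af (_ : (y + 1 <= 0) = false); last by apply/negbTE; rewrite -ltNge; lra.
rewrite (_ : (y <= 0) = false); last by apply/negbTE; rewrite -ltNge; lra.
exact: Uf_shift.
Qed.

Lemma F0_lo_bnd y : y <= - 2^-1 -> F0 y * (1 + b) <= b.
Proof.
hb => hy; set r := nearest y; have /andP [h1 h2] := nb y; rewrite -/r in h1 h2.
have r0 : r <= 0 by apply: int_le0; lra.
rewrite (F0_piece r y) ?h1 ?h2 // /Af ifT; last by lra.
rewrite Lf_mul.
have [e|ne] := eqVneq r 0.
  rewrite e oppr0 expr0z mul1r; move: h1; rewrite e /= (_ : (0:int)%:~R = 0 :> R) // => h1.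
  have -> : y = - 2^-1 by lra.
  lra.
have hB : b ^ (- r) <= b by apply: bpow_leb; lia.
have hB0 : 0 < b ^ (- r) by apply: exprz_gt0.
have hr : r <= -1 by lia.
move: hr; rewrite -(ler_int R) => hr; move: hr; rewrite (_ : (-1)%:~R = -1) // => hr.
have hX : b + (y - r%:~R + 2^-1) * (1 - b) <= 1 by nra.
have hX0 : 0 <= b + (y - r%:~R + 2^-1) * (1 - b) by nra.
nra.
Qed.

Lemma F0_hi_bnd y : - 2^-1 <= y -> b <= F0 y * (1 + b).
Proof.
hb => hy; have [hy0|hy0] := lerP y 0.
  rewrite (F0_piece 0 y); last by apply/andP; split; lra.
  rewrite /Af hy0 Lf_mul oppr0 expr0z mul1r /=; nra.
set r := nearest y; have /andP [h1 h2] := nb y; rewrite -/r in h1 h2.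
have r0 : 0 <= r by apply: int_ge0; lra.
rewrite (F0_piece r y) ?h1 ?h2 // /Af ifN -?ltNge //.
have := Uf_mul r y; have /andP [hB0 hB1] := @bpow_le1 r r0 => hU.
have hX : b + (r%:~R - y + 2^-1) * (1 - b) <= 1 by nra.
have hX0 : 0 <= b + (r%:~R - y + 2^-1) * (1 - b) by nra.
have hBX : b ^ r * (b + (r%:~R - y + 2^-1) * (1 - b)) <= 1 by nra.
nra.
Qed.

Lemma F0_bnd y : 0 <= F0 y <= 1.
Proof.
hb; set r := nearest y; have /andP [h1 h2] := nb y; rewrite -/r in h1 h2.
rewrite (F0_piece r y) ?h1 ?h2 // /Af.
have hb1 : 0 < 1 + b by lra.
case: ifP => hy0.
  have r0 : r <= 0 by apply: int_le0; lra.
  have /andP [hB0 hB1] : 0 < b ^ (- r) <= 1 by apply: bpow_le1; lia.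
  have := Lf_mul r y => hL.
  have hX : b + (y - r%:~R + 2^-1) * (1 - b) <= 1 by nra.
  have hX0 : 0 <= b + (y - r%:~R + 2^-1) * (1 - b) by nra.
  have hBX : b ^ (- r) * (b + (y - r%:~R + 2^-1) * (1 - b)) <= 1 by nra.
  have hBX0 : 0 <= b ^ (- r) * (b + (y - r%:~R + 2^-1) * (1 - b)) by nra.
  apply/andP; split; nra.
have r0 : 0 <= r by apply: int_ge0; move/negbT: hy0; rewrite -ltNge => hy0; lra.
have /andP [hB0 hB1] := @bpow_le1 r r0.
have := Uf_mul r y => hU.
move/negbT: hy0; rewrite -ltNge => hy0.
have hX : b + (r%:~R - y + 2^-1) * (1 - b) <= 1 by nra.
have hX0 : 0 <= b + (r%:~R - y + 2^-1) * (1 - b) by nra.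
have hBX : b ^ r * (b + (r%:~R - y + 2^-1) * (1 - b)) <= 1 by nra.
have hBX0 : 0 <= b ^ r * (b + (r%:~R - y + 2^-1) * (1 - b)) by nra.
apply/andP; split; nra.
Qed.

Lemma F0_half : F0 0 = 2^-1.
Proof.
rewrite (F0_piece 0 0); last by apply/andP; split; lra.
rewrite /Af lexx /Lf oppr0 expr0z mul1r. have := b1ne0 => h. field. exact: h.
Qed.

Lemma F0_sym y : F0 (- y) = 1 - F0 y.
Proof.
have [hy|hy|->] := ltgtP y 0; last by rewrite oppr0 F0_half; lra.
  set r := nearest y; have /andP [h1 h2] := nb y; rewrite -/r in h1 h2.
  rewrite (F0_piece r y) ?h1 ?h2 // (F0_piece (- r) (- y)); last first.
    by rewrite intrN; apply/andP; split; lra.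
  rewrite /Af ifN -?ltNge; last by lra.
  rewrite ifT; last by lra.
  rewrite /Uf /Lf intrN opprK; congr (_ - _ * (_ + _ * _)). lra.
set r := nearest y; have /andP [h1 h2] := nb y; rewrite -/r in h1 h2.
rewrite (F0_piece r y) ?h1 ?h2 // (F0_piece (- r) (- y)); last first.
  by rewrite intrN; apply/andP; split; lra.
rewrite /Af ifT; last by lra.
rewrite ifN -?ltNge; last by lra.
rewrite /Uf /Lf intrN !opprK (_ : forall X : R, 1 - (1 - X) = X); last by move=> X; lra.
congr (_ * (_ + _ * _)); lra.
Qed.

Lemma coef_bnd B : 0 <= B <= 1 -> 0 <= B * (1 - b) / (1 + b) <= 1.
Proof.
hb => /andP [h1 h2]; have hb1 : 0 < 1 + b by lra.
rewrite -mulrA; apply/andP; split.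
  apply: mulr_ge0 => //; apply: divr_ge0; lra.
have : (1 - b) / (1 + b) <= 1 by rewrite ler_pdivrMr //; lra.
have : 0 <= (1 - b) / (1 + b) by apply: divr_ge0; lra.
nra.
Qed.

Lemma F0_lip_piece r y y' :
  r%:~R - 2^-1 <= y' -> y <= r%:~R + 2^-1 -> y' <= y ->
  0 <= F0 y - F0 y' <= y - y'.
Proof.
hb => h1 h2 hyy.
rewrite (F0_piece r y); last by apply/andP; split; lra.
rewrite (F0_piece r y'); last by apply/andP; split; lra.
rewrite /Af.
have [hy0|hy0] := lerP y 0.
  rewrite [X in _ - X]ifT; last by lra.
  have r0 : r <= 0 by apply: int_le0; lra.
  have hB : 0 <= b ^ (- r) <= 1.
    have /andP [? ?] : 0 < b ^ (- r) <= 1 by apply: bpow_le1; lia.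
    by apply/andP; split; lra.
  rewrite Lf_diff; have /andP [c1 c2] := @coef_bnd _ hB.
  apply/andP; split; nra.
have [hy1|hy1] := lerP y' 0.
  have r0 : r <= 0 by apply: int_le0; lra.
  have r1 : 0 <= r by apply: int_ge0; lra.
  have -> : r = 0 by lia.
  rewrite -LU0 Lf_diff.
  have hB : 0 <= b ^ (- 0) <= 1 by rewrite oppr0 expr0z; lra.
  have /andP [c1 c2] := @coef_bnd _ hB.
  apply/andP; split; nra.
have r1 : 0 <= r by apply: int_ge0; lra.
have hB : 0 <= b ^ r <= 1.
  by have /andP [? ?] := @bpow_le1 r r1; apply/andP; split; lra.
rewrite Uf_diff; have /andP [c1 c2] := @coef_bnd _ hB.
apply/andP; split; nra.
Qed.

Lemma F0_lip y y' : y' <= y -> y <= y' + 2^-1 -> 0 <= F0 y - F0 y' <= y - y'.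
Proof.
move=> hyy hy.
set r := nearest y'; have /andP [h1 h2] := nb y'; rewrite -/r in h1 h2.
have [hp|hp] := lerP y (r%:~R + 2^-1); first exact: (@F0_lip_piece r y y' h1 hp hyy).
pose p : R := r%:~R + 2^-1.
have /andP [a1 a2] := @F0_lip_piece r p y' h1 (lexx p) h2.
have /andP [a3 a4] : 0 <= F0 y - F0 p <= y - p.
  by apply: (@F0_lip_piece (r + 1)); rewrite ?intrD1 /p; lra.
apply/andP; split; lra.
Qed.

Lemma F0_tail e : 0 < e -> exists y, F0 y <= e.
Proof.
hb => he.
pose t := b^-1 - 1.
have ht : 0 < t by rewrite /t subr_gt0 invf_gt1.
have bern : forall k : nat, 1 + k%:R * t <= (1 + t) ^+ k.
  elim=> [|k ih]; first by rewrite mul0r addr0 expr0.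
  rewrite exprSr -natr1.
  have : 0 <= k%:R * t :> R by apply: mulr_ge0; [exact: ler0n | lra].
  nra.
pose k := Num.trunc (e^-1 / t).
have hk : e^-1 / t < k.+1%:R by exact: truncnS_gt.
exists (- (k.+1%:R)).
rewrite (F0_piece (- (k.+1%:Z)) _); last by rewrite intrN; apply/andP; split; lra.
rewrite /Af ifT; last by have := ler0n R k.+1; lra.
rewrite /Lf opprK intrN opprK (_ : b ^ (k.+1%:Z) = b ^+ k.+1) ?exprnP //.
have e1 : (1 + t) = b^-1 by rewrite /t; lra.
have hbk : b ^+ k.+1 * (1 + t) ^+ k.+1 = 1 by rewrite e1 -exprMn divff ?bne0 // expr1n.
have hB := bern k.+1.
have hbk0 : 0 < b ^+ k.+1 by exact: exprn_gt0.
have hkt : e^-1 < k.+1%:R * t by rewrite -ltr_pdivrMr.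
have he1 : e * e^-1 = 1 by rewrite divff // gt_eqF.
have hb1 : 0 < 1 + b by lra.
have -> : b ^+ k.+1 / (1 + b) * (b + (- k.+1%:R + k.+1%:R + 2^-1) * (1 - b)) = b ^+ k.+1 / 2.
  rewrite (_ : - k.+1%:R + k.+1%:R = 0 :> R); last by rewrite addNr.
  have := b1ne0 => h. field. exact: h.
have : b ^+ k.+1 <= e.
  have h3 : b ^+ k.+1 * (1 + k.+1%:R * t) <= 1 by nra.
  have h4 : b ^+ k.+1 * e^-1 <= 1 by nra.
  have -> : b ^+ k.+1 = b ^+ k.+1 * e^-1 * e by rewrite -mulrA mulVf ?mulr1 // gt_eqF.
  nra.
lra.
Qed.
End Tul0.
Section Gq.
Variables (R : realType) (b q d : R).
Hypotheses (b0 : 0 < b) (b1 : b < 1) (d0 : 0 <= d) (q0 : 0 <= q) (q1 : q < 1)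
  (hq : q * (1 - b) = 2 * d * b * (1 - q)).
Local Ltac hh := move: (b0) (b1) (d0) (q0) (q1) (hq) => ? ? ? ? ? ?.

Definition Gc (u : R) : R :=
  (if (q / 2 <= u) && (u <= 1 - q / 2) then (u - q / 2) / (1 - q) else 0)
  + (if 1 - q / 2 < u then 1 else 0).

Lemma G_cases u :
  [\/ u < q / 2 /\ Gc u = 0,
      [/\ q / 2 <= u, u <= 1 - q / 2 & Gc u * (1 - q) = u - q / 2] |
      1 - q / 2 < u /\ Gc u = 1].
Proof.
hh; rewrite /Gc.
have hq1 : 1 - q != 0 by rewrite gt_eqF //; lra.
have [h1|h1] := lerP (q / 2) u; have [h2|h2] := lerP u (1 - q / 2) => /=.
- by apply: Or32; split => //; rewrite addr0 mulrVK // unitfE.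
- by apply: Or33; split => //; rewrite add0r.
- by apply: Or31; split => //; rewrite addr0.
- lra.
Qed.


Lemma G_bnd u : 0 <= Gc u <= 1.
Proof.
hh; case: (G_cases u) => [[h e]|[h1 h2 e]|[h e]]; rewrite ?e; try lra.
apply/andP; split; nra.
Qed.

Lemma G_sym u : Gc (1 - u) = 1 - Gc u.
Proof.
hh; case: (G_cases u) => [[h e]|[h1 h2 e]|[h e]];
  case: (G_cases (1 - u)) => [[h' e']|[h1' h2' e']|[h' e']]; rewrite ?e ?e'; try lra.
have hq1 : 0 < 1 - q by lra.
nra.
Qed.

Lemma G_lip u u' : u' <= u -> 0 <= Gc u - Gc u' <= (u - u') / (1 - q).
Proof.
hh => hu.
have hq1 : 0 < 1 - q by lra.
have hi : 0 < (1 - q)^-1 by rewrite invr_gt0.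
have hii : (1 - q) * (1 - q)^-1 = 1 by rewrite divff // gt_eqF.
rewrite mulrC.
case: (G_cases u) => [[h e]|[h1 h2 e]|[h e]];
  case: (G_cases u') => [[h' e']|[h1' h2' e']|[h' e']]; rewrite ?e ?e';
  apply/andP; split; nra.
Qed.

Lemma G_small u : 0 <= u -> Gc u * (1 - q) <= u.
Proof.
hh => hu; case: (G_cases u) => [[h e]|[h1 h2 e]|[h e]]; rewrite ?e; nra.
Qed.

(* step relation between u = F0 y and v = F0 (y+1) *)
Definition steprel (u v : R) :=
  0 <= u <= 1 /\
  ((v * b = u /\ u * (1 + b) <= b) \/ (1 - v = b * (1 - u) /\ b <= u * (1 + b))).

Lemma G_mono u v : steprel u v -> Gc u <= Gc v.
Proof.
hh => [[/andP [u0 u1] [[e h]|[e h]]]].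
- have : u <= v by nra.
  by move=> /G_lip /andP [? ?]; lra.
- have : u <= v by nra.
  by move=> /G_lip /andP [? ?]; lra.
Qed.

Lemma G_dp1 u v : steprel u v -> b * Gc v <= Gc u + b * d.
Proof.
hh => [[/andP [u0 u1] hr]].
have hq1 : 0 < 1 - q by lra.
have := G_bnd u; have := G_bnd v => /andP [gv0 gv1] /andP [gu0 gu1].
case: (G_cases u) => [[h e]|[h1 h2 e]|[h e]];
  case: (G_cases v) => [[h' e']|[h1' h2' e']|[h' e']]; rewrite ?e ?e';
  case: hr => [[er hr]|[er hr]]; try nra.
Qed.

Lemma G_dp2 u v : steprel u v -> b * (1 - Gc u) <= 1 - Gc v + b * d.
Proof.
hh => [[/andP [u0 u1] hr]].
have hq1 : 0 < 1 - q by lra.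
have := G_bnd u; have := G_bnd v => /andP [gv0 gv1] /andP [gu0 gu1].
case: (G_cases u) => [[h e]|[h1 h2 e]|[h e]];
  case: (G_cases v) => [[h' e']|[h1' h2' e']|[h' e']]; rewrite ?e ?e';
  case: hr => [[er hr]|[er hr]]; try nra.
all: have hm : (b * (1 - Gc u) - (1 - Gc v + b * d)) * (1 - q) <= 0 by nra.
all: nra.
Qed.

Lemma G_tight u v : steprel u v -> 0 < Gc u ->
  [\/ Gc u + b * d <= b * Gc v, 1 - b * (1 - Gc u) + b * d <= Gc v | 1 <= Gc v].
Proof.
hh => [[/andP [u0 u1] hr]] hpos.
have hq1 : 0 < 1 - q by lra.
have := G_bnd u; have := G_bnd v => /andP [gv0 gv1] /andP [gu0 gu1].
case: (G_cases u) => [[h e]|[h1 h2 e]|[h e]];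
  case: (G_cases v) => [[h' e']|[h1' h2' e']|[h' e']]; rewrite ?e ?e' in hpos *;
  case: hr => [[er hr]|[er hr]]; try lra.
all: try (apply: Or33; lra).
all: try (apply: Or31; nra).
all: try (apply: Or32; nra).
Qed.
End Gq.
Section Binom.
Variables (R : realType) (n : nat).

Lemma binom_ge0 (th : R) x : 0 <= th <= 1 -> 0 <= binom_pmf n th x.
Proof.
move=> /andP [h0 h1]; rewrite /binom_pmf; apply: mulr_ge0; first apply: mulr_ge0.
- exact: ler0n.
- exact: exprn_ge0.
- by apply: exprn_ge0; lra.
Qed.

Lemma binom_gt0 (th : R) x : 0 < th < 1 -> (x <= n)%N -> 0 < binom_pmf n th x.
Proof.
move=> /andP [h0 h1] hx; rewrite /binom_pmf; apply: mulr_gt0; first apply: mulr_gt0.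
- by rewrite ltr0n bin_gt0.
- exact: exprn_gt0.
- by apply: exprn_gt0; lra.
Qed.

Lemma binom_sum (th : R) : \sum_(x < n.+1) binom_pmf n th x = 1.
Proof.
rewrite -(expr1n R n) -{1}(subrK th 1) exprDn.
apply: eq_bigr => i _; rewrite /binom_pmf -mulr_natl; ring.
Qed.

Definition Lrat (th0 th : R) (x : nat) :=
  (th / th0) ^+ x * ((1 - th) / (1 - th0)) ^+ (n - x).

Lemma binom_ratio (th0 th : R) x : 0 < th0 < 1 ->
  binom_pmf n th x = Lrat th0 th x * binom_pmf n th0 x.
Proof.
move=> /andP [h0 h1]; rewrite /binom_pmf /Lrat !exprMn !exprVn.
have a1 : th0 ^+ x != 0 by rewrite expf_neq0 // gt_eqF.
have a2 : (1 - th0) ^+ (n - x) != 0 by rewrite expf_neq0 // gt_eqF //; lra.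
field. by apply/andP.
Qed.

Lemma Lrat_ge0 (th0 th : R) x : 0 < th0 < 1 -> 0 <= th <= 1 -> 0 <= Lrat th0 th x.
Proof.
move=> /andP [h0 h1] /andP [h2 h3]; rewrite /Lrat; apply: mulr_ge0; apply: exprn_ge0;
  apply: divr_ge0; lra.
Qed.

Lemma Lrat_step (th0 th : R) x : 0 < th0 < 1 -> 0 <= th <= 1 -> (x < n)%N ->
  Lrat th0 th x.+1 - Lrat th0 th x =
  (th / th0) ^+ x * ((1 - th) / (1 - th0)) ^+ (n - x.+1) * (th / th0 - (1 - th) / (1 - th0)).
Proof.
move=> _ _ hx; rewrite /Lrat.
have -> : (n - x = (n - x.+1).+1)%N by lia.
rewrite !exprS; ring.
Qed.

Lemma Lrat_up (th0 th : R) x y : 0 < th0 < 1 -> th0 <= th <= 1 -> (x <= y <= n)%N ->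
  Lrat th0 th x <= Lrat th0 th y.
Proof.
move=> h0 /andP [h1 h2] /andP [hxy hy].
have h01 : 0 <= th <= 1 by move: h0 => /andP [? ?]; apply/andP; split; lra.
elim: y hxy hy => [|y ih] hxy hy.
  by have -> : x = 0%N by lia.
have [e|ne] := eqVneq x y.+1; first by rewrite e.
have hxy' : (x <= y)%N by lia.
apply: le_trans (ih hxy' (ltnW hy)) _.
rewrite -subr_ge0 Lrat_step //.
move: h0 => /andP [a0 a1].
apply: mulr_ge0; first (apply: mulr_ge0; apply: exprn_ge0; apply: divr_ge0; lra).
rewrite subr_ge0 ler_pdivrMr; last by lra.
rewrite mulrAC ler_pdivlMr //; nra.
Qed.

Lemma Lrat_down (th0 th : R) x y : 0 < th0 < 1 -> 0 <= th <= th0 -> (x <= y <= n)%N ->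
  Lrat th0 th y <= Lrat th0 th x.
Proof.
move=> h0 /andP [h1 h2] /andP [hxy hy].
have h01 : 0 <= th <= 1 by move: h0 => /andP [? ?]; apply/andP; split; lra.
elim: y hxy hy => [|y ih] hxy hy.
  by have -> : x = 0%N by lia.
have [e|ne] := eqVneq x y.+1; first by rewrite e.
have hxy' : (x <= y)%N by lia.
apply: le_trans _ (ih hxy' (ltnW hy)).
rewrite -subr_le0 Lrat_step //.
move: h0 => /andP [a0 a1].
apply: mulr_ge0_le0; first (apply: mulr_ge0; apply: exprn_ge0; apply: divr_ge0; lra).
rewrite subr_le0 ler_pdivlMr; last by lra.
rewrite mulrAC ler_pdivrMr //; nra.
Qed.

Lemma cross_sum (w g : nat -> R) :
  (forall x y, (x <= y <= n)%N -> w x < 0 -> w y <= 0) ->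
  (forall x y, (x <= y <= n)%N -> g x <= g y) ->
  (forall x, (x <= n)%N -> 0 <= g x) ->
  \sum_(x < n.+1) w x <= 0 ->
  \sum_(x < n.+1) w x * g x <= 0.
Proof.
move=> hw hg hg0 hs.
have [k [hkn hk]] : exists k, (k <= n)%N /\ forall x, (x <= n)%N -> w x * (g x - g k) <= 0.
  case: (boolP [exists x : 'I_n.+1, w x < 0]) => [/existsP [x0 hx0]|].
    have exP : exists m, (m <= n)%N && (w m < 0).
      by exists x0; rewrite hx0 andbT -ltnS ltn_ord.
    case: (ex_minnP exP) => k /andP [hkn hk] hmin.
    exists k; split => // x hx.
    have [hxk|hxk] := leqP k x.
      apply: mulr_le0_ge0; first by apply: (hw k) => //; rewrite hxk hx.
      by rewrite subr_ge0; apply: hg; rewrite hxk hx.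
    have hwx : 0 <= w x.
      rewrite leNgt; apply/negP => hwx.
      by have := hmin x; rewrite hx hwx /= => /(_ isT); lia.
    apply: mulr_ge0_le0 => //; rewrite subr_le0; apply: hg; rewrite (ltnW hxk) hkn.
    done.
  rewrite negb_exists => /forallP hall.
  exists n; split => // x hx.
  have := hall (Ordinal (hx : (x < n.+1)%N)); rewrite /= -leNgt => hwx.
  by apply: mulr_ge0_le0 => //; rewrite subr_le0; apply: hg; rewrite hx leqnn.
have -> : \sum_(x < n.+1) w x * g x =
  \sum_(x < n.+1) w x * (g x - g k) + (\sum_(x < n.+1) w x) * g k.
  rewrite mulr_suml -big_split /=; apply: eq_bigr => i _; ring.
have h1 : \sum_(x < n.+1) w x * (g x - g k) <= 0.
  by apply: sumr_le0 => i _; apply: hk; rewrite -ltnS.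
have h2 : (\sum_(x < n.+1) w x) * g k <= 0 by apply: mulr_le0_ge0 => //; apply: hg0.
lra.
Qed.
End Binom.
Section Meas.
Variable R : realType.

Lemma meas_le (t : R) : measurable [set s : R | s <= t].
Proof. by have := @measurable_itv _ `]-oo, t]%R; rewrite set_itvNyc. Qed.
Lemma meas_lt (t : R) : measurable [set s : R | s < t].
Proof. by have := @measurable_itv _ `]-oo, t[%R; rewrite set_itvNyo. Qed.
Lemma meas_ge (t : R) : measurable [set s : R | t <= s].
Proof. by have := @measurable_itv _ `[t, +oo[%R; rewrite set_itvcy. Qed.

Lemma cdf_mono (P : probability R R) (F : R -> R) :
  (forall t, P [set s | s <= t] = (F t)%:E) ->
  forall s t, s <= t -> F s <= F t.
Proof.
move=> hF s t hst; rewrite -lee_fin -!hF; apply: le_measure; rewrite ?inE;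
  [exact: meas_le | exact: meas_le |].
by move=> x /= hx; apply: le_trans hst.
Qed.

Lemma cdf_tail (P : probability R R) (F : R -> R) (K : R) :
  0 <= K ->
  (forall t, P [set s | s <= t] = (F t)%:E) ->
  (forall y y', y' <= y -> y <= y' + 2^-1 -> F y - F y' <= K * (y - y')) ->
  forall a, P [set s | a <= s] = (1 - F a)%:E.
Proof.
move=> K0 hF hL a.
have -> : [set s | a <= s] = ~` [set s | s < a].
  apply/seteqP; split => x /=; rewrite leNgt; first by move/negP.
  by move/negP.
rewrite probability_setC; last exact: meas_lt.
suff -> : P [set s | s < a] = (F a)%:E by [].
have up : (P [set s : R | (s < a)%R] <= (F a)%:E)%E.
  rewrite -hF; apply: le_measure; rewrite ?inE; [exact: meas_lt | exact: meas_le |].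
  by move=> x /= hx; apply: ltW.
have lo : forall h, 0 < h -> ((F (a - h))%:E <= P [set s : R | (s < a)%R])%E.
  move=> h h0; rewrite -hF; apply: le_measure; rewrite ?inE; [exact: meas_le | exact: meas_lt |].
  by move=> x /= hx; apply: le_lt_trans hx _; lra.
have ge0 : (0 <= P [set s : R | (s < a)%R])%E by apply: measure_ge0.
have fin : P [set s | s < a] \is a fin_num.
  by rewrite ge0_fin_numE //; apply: le_lt_trans up _; exact: ltry.
rewrite -(fineK fin) in up lo *; set m := fine _ in up lo *.
rewrite lee_fin in up; congr (_%:E).
have lo' : forall h, 0 < h -> F (a - h) <= m by move=> h h0; rewrite -lee_fin; exact: lo.
apply/eqP; rewrite eq_le up /=; rewrite leNgt; apply/negP => hm.
have hK1 : 0 < 2 * (K + 1) by lra.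
pose h0 := (F a - m) / (2 * (K + 1)).
have hh0 : 0 < h0 by apply: divr_gt0; lra.
have hKh : K * h0 < F a - m.
  have e : h0 * (2 * (K + 1)) = F a - m by rewrite /h0 mulrVK // unitfE gt_eqF.
  nra.
have [hh|hh] := lerP h0 (2^-1).
  have := hL a (a - h0); have := lo' h0 hh0.
  have -> : a - (a - h0) = h0 by ring.
  move=> l1 l2; have := l2 ltac:(lra) ltac:(lra); lra.
have := hL a (a - 2^-1); have := lo' (2^-1) ltac:(lra).
have -> : a - (a - 2^-1) = 2^-1 :> R by ring.
move=> l1 l2; have := l2 ltac:(lra) ltac:(lra); nra.
Qed.
End Meas.

Section Thr.
Variable R : realType.

Lemma le_eps (X Y L : R) : 0 <= L ->
  (forall h, 0 < h -> h <= 2^-1 -> X <= Y + L * h) -> X <= Y.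
Proof.
move=> L0 H; rewrite leNgt; apply/negP => hXY.
have hK1 : 0 < 2 * (L + 1) by lra.
pose h0 := (X - Y) / (2 * (L + 1)).
have hh0 : 0 < h0 by apply: divr_gt0; lra.
have e : h0 * (2 * (L + 1)) = X - Y by rewrite /h0 mulrVK // unitfE gt_eqF.
have [hh|hh] := lerP h0 (2^-1).
  have := H h0 hh0 hh; nra.
have := H (2^-1) ltac:(lra) (lexx _); nra.
Qed.

Lemma threshold (f : R -> R) (a L : R) : 0 <= L ->
  (forall z z', z <= z' -> f z' <= f z) ->
  (forall z z', z <= z' -> z' <= z + 2^-1 -> f z - f z' <= L * (z' - z)) ->
  (exists z, a < f z) -> (exists z, f z <= a) ->
  exists c, (forall z, f z <= a <-> c <= z) /\ f c = a.
Proof.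
move=> L0 fmono flip [z0 hz0] [z1 hz1].
pose S := [set z | a < f z].
have ub : ubound S z1.
  move=> z; rewrite /S /= => hz; rewrite leNgt; apply/negP => hlt.
  have := fmono _ _ (ltW hlt); lra.
have hs : has_sup S by split; [exists z0; rewrite /S /= | exists z1].
pose c := sup S.
have below : forall z, z < c -> a < f z.
  move=> z hz; have czpos : 0 < c - z by rewrite subr_gt0.
  have [s /= hs1 hs2] := sup_adherent czpos hs.
  rewrite -/c in hs2; move: hs1; rewrite /S /= => hs1.
  have := fmono z s ltac:(lra); lra.
have above : forall z, c < z -> f z <= a.
  move=> z hz; rewrite leNgt; apply/negP => hfz.
  have hzS : S z by rewrite /S /=.
  have := ub_le_sup (proj2 hs) hzS; rewrite -/c; lra.
have fc1 : f c <= a.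
  apply: (@le_eps _ _ L L0) => h h0 hh.
  have := flip c (c + h) ltac:(lra) ltac:(lra); have := above (c + h) ltac:(lra).
  have -> : c + h - c = h by ring.
  lra.
have fc2 : a <= f c.
  apply: (@le_eps _ _ L L0) => h h0 hh.
  have := flip (c - h) c ltac:(lra) ltac:(lra); have := below (c - h) ltac:(lra).
  have -> : c - (c - h) = h by ring.
  lra.
exists c; split; last by apply/eqP; rewrite eq_le fc1 fc2.
move=> z; split => hz.
  rewrite leNgt; apply/negP => hzc; have := below z hzc; lra.
move: hz; rewrite le_eqVlt => /orP [/eqP <-|hz]; first exact: fc1.
exact: above.
Qed.
End Thr.

Section FNs.
Variables (R : realType) (b q d : R).
Hypotheses (b0 : 0 < b) (b1 : b < 1) (d0 : 0 <= d) (q0 : 0 <= q) (q1 : q < 1)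
  (hq : q * (1 - b) = 2 * d * b * (1 - q)).
Local Ltac hh := move: (b0) (b1) (d0) (q0) (q1) (hq) => ? ? ? ? ? ?.

Definition FN (y : R) := tulap_cdf 0 b q y.

Lemma FN_G y : FN y = Gc R q (F0 R b y).
Proof. by hh. Qed.

Lemma FN_step y : steprel R b (F0 R b y) (F0 R b (y + 1)).
Proof.
hh; split; first exact: F0_bnd.
have [hy|hy] := lerP y (- 2^-1).
  left; split; last exact: F0_lo_bnd.
  by rewrite (@F0_step_lo R b b0 b1 y hy) mulfVK // gt_eqF.
right; split; [exact: F0_step_hi (ltW hy) | exact: F0_hi_bnd (ltW hy)].
Qed.

Lemma FN_bnd y : 0 <= FN y <= 1.
Proof. hh; rewrite FN_G; exact: (@G_bnd R b q d b0 b1 d0 q0 q1 hq). Qed.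

Lemma FN_sym y : FN (- y) = 1 - FN y.
Proof. hh; rewrite !FN_G (@F0_sym R b b0 b1); exact: (@G_sym R b q d b0 b1 d0 q0 q1 hq). Qed.

Lemma FN_lip y y' : y' <= y -> y <= y' + 2^-1 -> FN y - FN y' <= (1 - q)^-1 * (y - y').
Proof.
hh => h1 h2; rewrite !FN_G.
have /andP [a1 a2] := @F0_lip R b b0 b1 y y' h1 h2.
have hu : F0 R b y' <= F0 R b y by lra.
have /andP [c1 c2] := @G_lip R b q d b0 b1 d0 q0 q1 hq _ _ hu.
have hi : 0 < (1 - q)^-1 by rewrite invr_gt0; lra.
apply: (le_trans c2); rewrite mulrC; nra.
Qed.

Lemma FN_mono1 y : FN y <= FN (y + 1).
Proof. hh; rewrite !FN_G; exact: (@G_mono R b q d b0 b1 d0 q0 q1 hq _ _ (FN_step y)). Qed.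

Lemma FN_dp1 y : b * FN (y + 1) <= FN y + b * d.
Proof. hh; rewrite !FN_G; exact: (@G_dp1 R b q d b0 b1 d0 q0 q1 hq _ _ (FN_step y)). Qed.

Lemma FN_dp2 y : b * (1 - FN y) <= 1 - FN (y + 1) + b * d.
Proof. hh; rewrite !FN_G; exact: (@G_dp2 R b q d b0 b1 d0 q0 q1 hq _ _ (FN_step y)). Qed.

Lemma FN_tight y : 0 < FN y ->
  [\/ FN y + b * d <= b * FN (y + 1), 1 - b * (1 - FN y) + b * d <= FN (y + 1)
    | 1 <= FN (y + 1)].
Proof. hh; rewrite !FN_G; exact: (@G_tight R b q d b0 b1 d0 q0 q1 hq _ _ (FN_step y)). Qed.

Lemma FN_tail e : 0 < e -> exists y, FN y <= e.
Proof.
hh => he; have he' : 0 < e * (1 - q) by apply: mulr_gt0; lra.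
have [y hy] := @F0_tail R b b0 b1 (e * (1 - q)) he'.
exists y; rewrite FN_G.
have := @G_small R b q d b0 b1 d0 q0 q1 hq _ (proj1 (andP (@F0_bnd R b b0 b1 y))).
have h1q : 0 < 1 - q by lra.
move=> h; rewrite -(ler_pM2r h1q); lra.
Qed.

Lemma tulap_shift (x : nat) t : tulap_cdf x%:R b q t = FN (t - x%:R).
Proof.
hh; rewrite /FN /tulap_cdf.
suff -> : tulap0_cdf x%:R b t = tulap0_cdf 0 b (t - x%:R) by [].
rewrite /tulap0_cdf nearest_nat nearest0 subr0 pmulrn subr_le0 //.
Qed.
End FNs.

Section Arith.
Variable R : realType.

Lemma step_arith (e b d p0 p1 u v : R) :
  0 < b -> e * b = 1 -> 0 <= d ->
  p0 <= u -> p1 <= 1 -> p1 <= e * p0 + d -> 1 - p0 <= e * (1 - p1) + d ->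
  [\/ u + b * d <= b * v, 1 - b * (1 - u) + b * d <= v | 1 <= v] -> p1 <= v.
Proof.
move=> hb heb hd h0 h1 h2 h3 [hc|hc|hc]; last lra.
- have Ee : e = b^-1.
    by apply: (mulIf (lt0r_neq0 hb)); rewrite heb mulVf // lt0r_neq0.
  have he : 0 <= e by rewrite Ee invr_ge0 ltW.
  have h4 : e * p0 <= e * u by apply: ler_wpM2l.
  have h5 : e * (u + b * d) <= e * (b * v) by apply: ler_wpM2l.
  have E1 : e * (b * v) = v by rewrite mulrA heb mul1r.
  have E2 : e * (b * d) = d by rewrite mulrA heb mul1r.
  rewrite [X in X <= _]mulrDr E2 in h5; lra.
- have h4 : b * (1 - p0) <= b * (e * (1 - p1) + d) by apply: ler_wpM2l; lra.
  have h5 : b * (1 - u) <= b * (1 - p0) by apply: ler_wpM2l; lra.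
  have E1 : b * (e * (1 - p1)) = 1 - p1 by rewrite mulrA (mulrC b) heb mul1r.
  rewrite [X in _ <= X]mulrDr E1 in h4; lra.
Qed.

Lemma dp_arith (e b d u v : R) :
  0 < b -> b < 1 -> e * b = 1 -> 0 <= d -> 0 <= u <= 1 -> 0 <= v <= 1 -> u <= v ->
  b * v <= u + b * d -> b * (1 - u) <= 1 - v + b * d ->
  [/\ u <= e * v + d, v <= e * u + d, 1 - u <= e * (1 - v) + d & 1 - v <= e * (1 - u) + d].
Proof.
move=> hb hb1 heb hd /andP [u0 u1] /andP [v0 v1] huv h1 h2.
have Ee : e = b^-1.
  by apply: (mulIf (lt0r_neq0 hb)); rewrite heb mulVf // lt0r_neq0.
have he : 1 <= e by rewrite Ee invf_ge1 //; lra.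
have he0 : 0 <= e by lra.
have E1 : e * (b * v) = v by rewrite mulrA heb mul1r.
have E2 : e * (b * d) = d by rewrite mulrA heb mul1r.
have E3 : e * (b * (1 - u)) = 1 - u by rewrite mulrA heb mul1r.
have k1 : e * (b * v) <= e * (u + b * d) by apply: ler_wpM2l.
have k2 : e * (b * (1 - u)) <= e * (1 - v + b * d) by apply: ler_wpM2l.
rewrite E1 [X in _ <= X]mulrDr E2 in k1; rewrite E3 [X in _ <= X]mulrDr E2 in k2.
have k3 : v <= e * v by rewrite -[X in X <= _]mul1r; apply: ler_wpM2r.
have k4 : 1 - u <= e * (1 - u) by rewrite -[X in X <= _]mul1r; apply: ler_wpM2r; lra.
split; lra.
Qed.
End Arith.

Theorem theorem5 (R : realType) (eps delta theta0 : R) (n : nat)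
    (TZ : nat -> probability R R) (TN : probability R R) :
  0 < eps -> 0 <= delta -> (0 < n)%N -> 0 < theta0 < 1 ->
  let b := expR (- eps) in
  let q := 2 * delta * b / (1 - b + 2 * delta * b) in
  (* Z | X = x  ~  Tulap(x, b, q) *)
  (forall x : nat, (x <= n)%N -> forall t : R,
      TZ x [set s | s <= t] = (tulap_cdf x%:R b q t)%:E) ->
  (* N ~ Tulap(0, b, q) *)
  (forall t : R, TN [set s | s <= t] = (tulap_cdf 0 b q t)%:E) ->
  (* P_theta(Z \in A) *)
  let PZ (theta : R) (A : set R) : R :=
    \sum_(x < n.+1) binom_pmf n theta x * fine (TZ x A) in
  (* p(theta0, z) = P(X' + N >= z), X' ~ Binom(n, theta0), N ~ Tulap(0,b,q) indep. *)
  let pval (z : R) : R :=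
    \sum_(x < n.+1) binom_pmf n theta0 x * fine (TN [set t | z - x%:R <= t]) in
  (* (1) p-value *)
  ((forall z, 0 <= pval z <= 1) /\
   forall theta, h0_set theta0 theta -> forall alpha, 0 < alpha < 1 ->
     PZ theta [set z | pval z <= alpha] <= alpha)
  /\
  (* (2) UMP test among D^n_{eps,delta} *)
  (forall alpha, 0 < alpha < 1 ->
     UMP n theta0 alpha (DP_tests eps delta n)
       (fun x => fine (TZ x [set z | pval z <= alpha])))
  /\
  (* (3) closed form *)
  (forall z, pval z = \sum_(x < n.+1) tulap_cdf 0 b q (x%:R - z) * binom_pmf n theta0 x).
Proof.
move=> heps hdel hn hth b q hTZ hTN PZ pval.
have hb0 : 0 < b by apply: expR_gt0.
have hb1 : b < 1 by rewrite /b expR_lt1 oppr_lt0.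
have hD : 0 < 1 - b + 2 * delta * b.
  have : 0 <= delta * b by apply: mulr_ge0; lra.
  lra.
have q0 : 0 <= q by apply: divr_ge0; [apply: mulr_ge0; [lra|lra] | lra].
have q1 : q < 1 by rewrite /q ltr_pdivrMr //; lra.
have hq : q * (1 - b) = 2 * delta * b * (1 - q).
  rewrite /q; field; exact: (negbT (gt_eqF hD)).
have he0 : 0 < expR eps by apply: expR_gt0.
have heb : expR eps * b = 1 by rewrite /b expRN mulfV // gt_eqF.
have hth' : 0 <= theta0 <= 1 by move: hth => /andP [? ?]; apply/andP; split; lra.
pose F := FN R b q.
have Fbnd : forall y, 0 <= F y <= 1 := @FN_bnd R b q delta hb0 hb1 hdel q0 q1 hq.
have Fsym : forall y, F (- y) = 1 - F y := @FN_sym R b q delta hb0 hb1 hdel q0 q1 hq.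
have Flip : forall y y', y' <= y -> y <= y' + 2^-1 -> F y - F y' <= (1 - q)^-1 * (y - y')
  := @FN_lip R b q delta hb0 hb1 hdel q0 q1 hq.
have Fmono1 : forall y, F y <= F (y + 1) := @FN_mono1 R b q delta hb0 hb1 hdel q0 q1 hq.
have Fdp1 : forall y, b * F (y + 1) <= F y + b * delta
  := @FN_dp1 R b q delta hb0 hb1 hdel q0 q1 hq.
have Fdp2 : forall y, b * (1 - F y) <= 1 - F (y + 1) + b * delta
  := @FN_dp2 R b q delta hb0 hb1 hdel q0 q1 hq.
have Ftight : forall y, 0 < F y ->
  [\/ F y + b * delta <= b * F (y + 1), 1 - b * (1 - F y) + b * delta <= F (y + 1)
    | 1 <= F (y + 1)] := @FN_tight R b q delta hb0 hb1 hdel q0 q1 hq.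
have Ftail : forall e, 0 < e -> exists y, F y <= e := @FN_tail R b q delta hb0 hb1 hdel q0 q1 hq.
have Fmono : forall s t, s <= t -> F s <= F t := @cdf_mono R TN F hTN.
pose K := (1 - q)^-1.
have K0 : 0 <= K by rewrite /K invr_ge0; lra.
have TNtail : forall a, TN [set s | a <= s] = (F (- a))%:E.
  by move=> a; rewrite (@cdf_tail R TN F K K0 hTN Flip a) Fsym.
have TZtail : forall x, (x <= n)%N -> forall a, TZ x [set s | a <= s] = (F (x%:R - a))%:E.
  move=> x hx a.
  have hx' : forall t, TZ x [set s | s <= t] = ((fun t => F (t - x%:R)) t)%:E.
    by move=> t; rewrite hTZ // (@tulap_shift R b q delta hb0 hb1 hdel q0 q1 hq).
  have hlip : forall y y', y' <= y -> y <= y' + 2^-1 ->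
      (fun t => F (t - x%:R)) y - (fun t => F (t - x%:R)) y' <= K * (y - y').
    move=> y y' h1 h2 /=.
    have := Flip (y - x%:R) (y' - x%:R) ltac:(lra) ltac:(lra).
    by have -> : y - x%:R - (y' - x%:R) = y - y' by ring.
  rewrite (@cdf_tail R (TZ x) _ K K0 hx' hlip a) /=.
  by rewrite -Fsym opprB.
have pvalE : forall z, pval z = \sum_(x < n.+1) binom_pmf n theta0 x * F (x%:R - z).
  by move=> z; rewrite /pval; apply: eq_bigr => x _; rewrite TNtail opprB.
have bge0 : forall th x, 0 <= th <= 1 -> 0 <= binom_pmf n th x.
  by move=> th x h; apply: binom_ge0.
have bsum : forall th : R, \sum_(x < n.+1) binom_pmf n th x = 1 by move=> th; apply: binom_sum.
have pmono : forall z z', z <= z' -> pval z' <= pval z.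
  move=> z z' hz; rewrite !pvalE; apply: ler_sum => i _.
  by apply: ler_wpM2l; [exact: bge0 | apply: Fmono; lra].
have plip : forall z z', z <= z' -> z' <= z + 2^-1 -> pval z - pval z' <= K * (z' - z).
  move=> z z' h1 h2; rewrite !pvalE -sumrB.
  apply: (@le_trans _ _ (\sum_(x < n.+1) binom_pmf n theta0 x * (K * (z' - z)))).
    apply: ler_sum => i _; rewrite -mulrBr; apply: ler_wpM2l; first exact: bge0.
    have := Flip (i%:R - z) (i%:R - z') ltac:(lra) ltac:(lra).
    by have -> : i%:R - z - (i%:R - z') = z' - z by ring.
  by rewrite -mulr_suml bsum mul1r.
have pbnd : forall z, 0 <= pval z <= 1.
  move=> z; rewrite pvalE; apply/andP; split.
    apply: sumr_ge0 => i _; apply: mulr_ge0; first exact: bge0.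
    by have /andP [? ?] := Fbnd (i%:R - z).
  rewrite -[X in _ <= X](bsum theta0); apply: ler_sum => i _.
  rewrite -[X in _ <= X](mulr1 (binom_pmf _ _ _)); apply: ler_wpM2l; first exact: bge0.
  by have /andP [? ?] := Fbnd (i%:R - z).
have thr : forall alpha, 0 < alpha < 1 -> exists c,
    (forall z, pval z <= alpha <-> c <= z) /\ pval c = alpha.
  move=> alpha /andP [a0 a1].
  apply: (@threshold R pval alpha K K0 pmono plip).
    have [y0 hy0] := Ftail ((1 - alpha) / 2) ltac:(lra).
    exists y0; rewrite pvalE.
    apply: (@lt_le_trans _ _ (\sum_(x < n.+1) binom_pmf n theta0 x * F (- y0))).
      by rewrite -mulr_suml bsum mul1r Fsym; lra.
    apply: ler_sum => i _; apply: ler_wpM2l; first exact: bge0.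
    by apply: Fmono; have := ler0n R i; lra.
  have [y1 hy1] := Ftail alpha a0.
  exists (n%:R - y1); rewrite pvalE.
  apply: (@le_trans _ _ (\sum_(x < n.+1) binom_pmf n theta0 x * F y1)).
    apply: ler_sum => i _; apply: ler_wpM2l; first exact: bge0.
    apply: Fmono; have : (i <= n)%N by rewrite -ltnS.
    by rewrite -(ler_nat R) => hi; lra.
  by rewrite -mulr_suml bsum mul1r.
have part3 : forall z, pval z = \sum_(x < n.+1) tulap_cdf 0 b q (x%:R - z) * binom_pmf n theta0 x.
  by move=> z; rewrite pvalE; apply: eq_bigr => i _; rewrite mulrC.
have key : forall alpha, 0 < alpha < 1 -> exists c,
    (forall x, (x <= n)%N -> fine (TZ x [set z | pval z <= alpha]) = F (x%:R - c)) /\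
    \sum_(x < n.+1) binom_pmf n theta0 x * F (x%:R - c) = alpha.
  move=> alpha ha; have [c [hc1 hc2]] := thr alpha ha.
  exists c; split; last by rewrite -pvalE.
  move=> x hx.
  have -> : [set z | pval z <= alpha] = [set z | c <= z].
    by apply/seteqP; split => z /= /hc1.
  by rewrite TZtail.
have gmono : forall c x y, (x <= y)%N -> F (x%:R - c) <= F (y%:R - c).
  by move=> c x y hxy; apply: Fmono; have := hxy; rewrite -(ler_nat R); lra.
have level : forall c, forall theta, h0_set theta0 theta ->
    \sum_(x < n.+1) binom_pmf n theta x * F (x%:R - c) <=
    \sum_(x < n.+1) binom_pmf n theta0 x * F (x%:R - c).
  move=> c theta [/andP [t0 t1] tt].
  rewrite -subr_le0 -sumrB.
  have -> : \sum_(i < n.+1) (binom_pmf n theta i * F (i%:R - c) - binom_pmf n theta0 i * F (i%:R - c))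
     = \sum_(i < n.+1) (binom_pmf n theta i - binom_pmf n theta0 i) * F (i%:R - c).
    by apply: eq_bigr => i _; rewrite mulrBl.
  apply: (@cross_sum R n (fun i => binom_pmf n theta i - binom_pmf n theta0 i)
                         (fun i => F (i%:R - c))).
  - move=> x y /andP [hxy hyn] /=.
    have hxn : (x <= n)%N by apply: leq_trans hyn.
    rewrite !(@binom_ratio R n theta0 theta _ hth).
    have bx := @binom_gt0 R n theta0 x hth hxn; have byy := @binom_gt0 R n theta0 y hth hyn.
    have hL := @Lrat_down R n theta0 theta x y hth ltac:(apply/andP; split; lra)
      ltac:(by rewrite hxy hyn).
    move=> hw.
    have hLx : Lrat R n theta0 theta x < 1 by nra.
    nra.
  - by move=> x y /andP [hxy _]; apply: gmono.
  - by move=> x _; have /andP [] := Fbnd (x%:R - c).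
  - by rewrite sumrB !bsum subrr.
split.
  split => // theta hth0 alpha ha.
  have [c [hc1 hc2]] := key alpha ha.
  rewrite /PZ.
  rewrite (eq_bigr (fun x : 'I_n.+1 => binom_pmf n theta x * F (x%:R - c))); last first.
    by move=> i _; rewrite hc1 // -ltnS.
  rewrite -[X in _ <= X]hc2; exact: level.
split; last exact: part3.
move=> alpha ha.
have [c [hc1 hc2]] := key alpha ha.
have expE : forall theta, expect n theta (fun x => fine (TZ x [set z | pval z <= alpha])) =
    \sum_(x < n.+1) binom_pmf n theta x * F (x%:R - c).
  by move=> theta; rewrite /expect; apply: eq_bigr => i _; rewrite hc1 // -ltnS.
split; [|split].
- split.
    move=> x hx; rewrite hc1 //; exact: Fbnd.
  move=> x hx; rewrite !hc1 //; last exact: ltnW.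
  have -> : x.+1%:R - c = (x%:R - c) + 1 by rewrite -natr1; ring.
  set y := x%:R - c.
  exact: (@dp_arith R _ _ _ _ _ hb0 hb1 heb hdel (Fbnd y) (Fbnd (y + 1)) (Fmono1 y) (Fdp1 y) (Fdp2 y)).
- by move=> theta hth0; rewrite expE -hc2; apply: level.
move=> phi [htest hdp] hlev theta [/andP [t0 t1] tt].
rewrite expE /expect -subr_le0 -sumrB.
pose g := fun i : nat => F (i%:R - c).
pose w := fun i : nat => binom_pmf n theta0 i * (phi i - g i).
have -> : \sum_(i < n.+1) (binom_pmf n theta i * phi i - binom_pmf n theta i * F (i%:R - c))
    = \sum_(i < n.+1) w i * Lrat R n theta0 theta i.
  apply: eq_bigr => i _; rewrite /w /g (@binom_ratio R n theta0 theta _ hth); ring.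
have hth1 : theta0 <= theta <= 1 by apply/andP; split; lra.
apply: cross_sum.
- move=> x y /andP [hxy hyn] hw.
  have hxn : (x <= n)%N by apply: leq_trans hyn.
  have bx := @binom_gt0 R n theta0 x hth hxn; have byy := @binom_gt0 R n theta0 y hth hyn.
  have dx : phi x < g x by move: hw; rewrite /w => hw; nra.
  suff : forall k, (x + k <= n)%N -> phi (x + k)%N <= g (x + k)%N /\ 0 < g (x + k)%N.
    have e : (x + (y - x) = y)%N by rewrite subnKC.
    move=> /(_ (y - x)%N); rewrite e => /(_ hyn) [h1 _].
    rewrite /w /=; nra.
  elim=> [|k ih] hk.
    rewrite addn0; have /andP [p0 _] := htest x hxn; split; [exact: ltW | exact: le_lt_trans p0 dx].
  have hk' : (x + k <= n)%N by move: hk; rewrite addnS; exact: ltnW.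
  have [ih1 ih2] := ih hk'.
  have hm : ((x + k) < n)%N by move: hk; rewrite addnS.
  rewrite addnS; move: hm ih1 ih2; set m := (x + k)%N => hm ih1 ih2.
  have ge : g m.+1 = F ((m%:R - c) + 1) by rewrite /g -natr1; congr F; ring.
  have [a1 a2 a3 a4] := hdp m hm.
  have /andP [p0 p1] := htest m.+1 hm.
  have /andP [p0' p1'] := htest m (ltnW hm).
  have hm1 := Fmono1 (m%:R - c).
  rewrite ge; move: ih1 ih2; rewrite /g => ih1 ih2.
  split; last exact: (lt_le_trans ih2 hm1).
  exact: (@step_arith R _ _ _ _ _ _ _ hb0 heb hdel ih1 p1 a2 a3 (Ftight _ ih2)).
- by move=> x y hxy; exact: (@Lrat_up R n theta0 theta x y hth hth1 hxy).
- move=> x _; have ht01 : 0 <= theta <= 1 by apply/andP; split; lra.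
  exact: (@Lrat_ge0 R n theta0 theta x hth ht01).
- rewrite /w.
  have := hlev theta0 (conj hth' (lexx theta0)); rewrite /expect -hc2 => hl.
  rewrite (eq_bigr (fun i : 'I_n.+1 => binom_pmf n theta0 i * phi i - binom_pmf n theta0 i * g i));
    last by move=> i _; rewrite mulrBr.
  by rewrite sumrB /g; lra.
Qed.
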